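(* Let $(F_S,\iota)$ be an embedded local étale algebra, $\Gamma\subseteq\mathrm{PGL}_2(F_S)$ a plectic subgroup and $g\in\mathrm{PGL}_2(F_S)$. Then $g\Gamma g^{-1}$ is plectic with set of distinguished limit points $\mathcal L_{g\Gamma g^{-1},S}=g(\mathcal L_{\Gamma,S})$.
   Context: Fix a prime $p$ and let $\mathbf{C}$ be the completion of an algebraic closure of $\mathbb{Q}_p$ or of $\mathbb{F}_p((T))$. An embedded local étale algebra $(F_S,\iota)$ consists of a finite non-empty set $S$, non-Archimedean local fields $F_\mathfrak p$ ($\mathfrak p\in S$) of residue characteristic $p$ and the same characteristic as $\mathbf C$, and embeddings $\iota_\mathfrak p\colon F_\mathfrak p\hookrightarrow\mathbf C$ (so $\mathbb P^1(F_\mathfrak p)\subseteq\mathbb P^1(\mathbf C)$). $\mathrm{PGL}_2(F_S)=\prod_\mathfrak p\mathrm{PGL}_2(F_\mathfrak p)$ acts componentwise by Möbius transformations on $\prod_{\mathfrak p\in S}\mathbb P^1(\mathbf C)$. The limit set $\mathcal L^S_\Gamma$ of a subgroup $\Gamma$ is the set of $x$ with $\gamma_j(y)\to x$ for some $y$ and pairwise distinct $\gamma_j\in\Gamma$. $\Gamma$ is plectic if there are subsets $\mathcal L_{\Gamma,\mathfrak p}\subseteq\mathbb P^1(F_\mathfrak p)$ with $\mathcal L^S_\Gamma=\bigcup_\mathfrak p\big(\mathcal L_{\Gamma,\mathfrak p}\times\prod_{\mathfrak q\ne\mathfrak p}\mathbb P^1(\mathbf C)\big)$; its set of distinguished limit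 points is $\mathcal L_{\Gamma,S}=\prod_\mathfrak p\mathcal L_{\Gamma,\mathfrak p}$. *)

(* Defs.v *)
From HB Require Import structures.
From mathcomp Require Import all_boot all_order all_algebra.
From mathcomp Require Import reals.
Set Implicit Arguments. Unset Strict Implicit. Unset Printing Implicit Defensive.
Import Order.TTheory GRing.Theory Num.Theory.
Local Open Scope ring_scope.

Section Defs.
Variables (R : realType) (C : fieldType) (abs : C -> R).

Definition is_na_abs : Prop :=
  (forall x, 0 <= abs x) /\ (forall x, abs x = 0 <-> x = 0) /\
  (forall x y, abs (x * y) = abs x * abs y) /\
  (forall x y, abs (x + y) <= Num.max (abs x) (abs y)).

Definition cvgC (u : nat -> C) (x : C) : Prop :=
  forall e : R, 0 < e -> exists N, forall n, (N <= n)%N -> abs (u n - x) < e.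
Definition cauchyC (u : nat -> C) : Prop :=
  forall e : R, 0 < e -> exists N, forall m n, (N <= m)%N -> (N <= n)%N ->
    abs (u m - u n) < e.
Definition completeC : Prop := forall u, cauchyC u -> exists x, cvgC u x.
Definition closedC (A : C -> Prop) : Prop :=
  forall u x, (forall n, A (u n)) -> cvgC u x -> A x.
Definition closureC (A : C -> Prop) : C -> Prop :=
  fun x => exists u, (forall n, A (u n)) /\ cvgC u x.
Definition denseC (A : C -> Prop) : Prop :=
  forall x (e : R), 0 < e -> exists y, A y /\ abs (x - y) < e.

Definition is_subfield (A : C -> Prop) : Prop :=
  A 0 /\ A 1 /\ (forall x y, A x -> A y -> A (x + y)) /\ (forall x, A x -> A (- x)) /\
  (forall x y, A x -> A y -> A (x * y)) /\ (forall x, A x -> x != 0 -> A x^-1).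

Definition prime_subfield : C -> Prop :=
  fun x => exists a b : int, b%:~R != 0 :> C /\ x = a%:~R / b%:~R.
Definition ratfun_field (t : C) : C -> Prop :=
  fun x => exists P Q : {poly C},
    (forall i, prime_subfield P`_i) /\ (forall i, prime_subfield Q`_i) /\
    Q.[t] != 0 /\ x = P.[t] / Q.[t].
Definition algebraic_over (L : C -> Prop) : C -> Prop :=
  fun x => exists P : {poly C}, P != 0 /\ (forall i, L P`_i) /\ root P x.

(** C is (isomorphic, as a valued field, to) the completion of an algebraic
    closure of Q_p (= closure of Q in C, with v(p) < 1) or of F_p((T))
    (= closure of F_p(t) in C, for some 0 < |t| < 1). *)
Definition is_completed_alg_closure (p : nat) : Prop :=
  prime p /\ is_na_abs /\ completeC /\
  ( ((forall n, (0 < n)%N -> n%:R != 0 :> C) /\ abs p%:R < 1 /\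
       denseC (algebraic_over (closureC prime_subfield)))
  \/ (p \in [pchar C] /\ exists t, 0 < abs t < 1 /\
       denseC (algebraic_over (closureC (ratfun_field t))))).

(** (the image in C of) a non-Archimedean local field: a closed (= complete)
    subfield with discrete nontrivial value group and finite residue field *)
Definition is_local_subfield (F : C -> Prop) : Prop :=
  is_subfield F /\ closedC F /\
  (exists r : R, 0 < r < 1 /\ (exists pi, F pi /\ abs pi = r) /\
     forall x, F x -> x != 0 -> exists k : int, abs x = r ^ k) /\
  (exists s : seq C, (forall y, y \in s -> F y /\ abs y <= 1) /\
     forall x, F x -> abs x <= 1 -> exists2 y, y \in s & abs (x - y) < 1).

Inductive P1 := Fin of C | Inf.

Definition inP1 (F : C -> Prop) (z : P1) : Prop :=
  match z with Fin a => F a | Inf => True end.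

Definition cvgP1 (u : nat -> P1) (x : P1) : Prop :=
  match x with
  | Fin a => forall e : R, 0 < e -> exists N, forall n, (N <= n)%N ->
               exists b, u n = Fin b /\ abs (b - a) < e
  | Inf => forall M : R, exists N, forall n, (N <= n)%N ->
               u n = Inf \/ exists b, u n = Fin b /\ M < abs b
  end.

Definition mobius (A : 'M[C]_2) (z : P1) : P1 :=
  let a := A ord0 ord0 in let b := A ord0 ord_max in
  let c := A ord_max ord0 in let d := A ord_max ord_max in
  match z with
  | Fin x => if c * x + d == 0 then Inf else Fin ((a * x + b) / (c * x + d))
  | Inf => if c == 0 then Inf else Fin (a / c)
  end.

Variables (S : finType) (F : S -> C -> Prop).

(** elements of PGL_2(F_S): families of invertible matrices with entries in F_s,
    taken modulo F_s^* scalars (pgl_eq) *)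
Definition inPGL (g : S -> 'M[C]_2) : Prop :=
  forall s, (forall i j, F s (g s i j)) /\ \det (g s) != 0.
Definition pgl_eq (g h : S -> 'M[C]_2) : Prop :=
  forall s, exists c, F s c /\ c != 0 /\ h s = c *: g s.

(** subgroups of PGL_2(F_S), represented by their (scalar-saturated) sets of
    matrix representatives *)
Definition is_subgroup (G : (S -> 'M[C]_2) -> Prop) : Prop :=
  (forall g, G g -> inPGL g) /\
  G (fun _ => 1%:M) /\
  (forall g h, G g -> G h -> G (fun s => g s *m h s)) /\
  (forall g, G g -> G (fun s => invmx (g s))) /\
  (forall g h, G g -> pgl_eq g h -> G h).

Definition conjG (g : S -> 'M[C]_2) (G : (S -> 'M[C]_2) -> Prop) :=
  fun h => exists k, G k /\ h = (fun s => g s *m k s *m invmx (g s)).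

Definition actS (g : S -> 'M[C]_2) (x : S -> P1) : S -> P1 :=
  fun s => mobius (g s) (x s).

Definition limit_set (G : (S -> 'M[C]_2) -> Prop) (x : S -> P1) : Prop :=
  exists (y : S -> P1) (gam : nat -> S -> 'M[C]_2),
    (forall j, G (gam j)) /\
    (forall i j, i <> j -> ~ pgl_eq (gam i) (gam j)) /\
    (forall s, cvgP1 (fun j => actS (gam j) y s) (x s)).

Definition plectic_witness (G : (S -> 'M[C]_2) -> Prop) (L : S -> P1 -> Prop) :=
  (forall s z, L s z -> inP1 (F s) z) /\
  (forall x, limit_set G x <-> exists s, L s (x s)).

Definition plectic (G : (S -> 'M[C]_2) -> Prop) : Prop :=
  is_subgroup G /\ exists L, plectic_witness G L.

Definition dist_points (L : S -> P1 -> Prop) : (S -> P1) -> Prop :=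
  fun x => forall s, L s (x s).

End Defs.

(* Main.v *)
Require Import Defs.
From mathcomp Require Import all_boot all_order all_algebra.
From mathcomp Require Import reals.
From mathcomp Require Import ring lra.
From Stdlib Require Import FunctionalExtensionality IndefiniteDescription.
Set Implicit Arguments. Unset Strict Implicit. Unset Printing Implicit Defensive.
Import Order.TTheory GRing.Theory Num.Theory.
Local Open Scope ring_scope.
Section NA.
Variables (R : realType) (C : fieldType) (abs : C -> R).
Hypothesis Habs : is_na_abs abs.

Lemma abs_ge0 x : 0 <= abs x. Proof. by case: Habs. Qed.
Lemma abs_eq0 x : abs x = 0 <-> x = 0. Proof. by case: Habs => _ []. Qed.
Lemma absM x y : abs (x * y) = abs x * abs y. Proof. by case: Habs => _ [_ []]. Qed.
Lemma absD x y : abs (x + y) <= Num.max (abs x) (abs y). Proof. by case: Habs => _ [_ [_]]. Qed.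
Lemma abs0 : abs 0 = 0. Proof. exact/abs_eq0. Qed.
Lemma abs_gt0 x : x != 0 -> 0 < abs x.
Proof. move=> nx; rewrite lt_def abs_ge0 andbT; apply/eqP => /abs_eq0 h; by rewrite h eqxx in nx. Qed.
Lemma abs1 : abs 1 = 1.
Proof.
have h := absM 1 1; rewrite mulr1 in h.
have n0 : abs 1 != 0 by apply/eqP => /abs_eq0 /eqP; rewrite oner_eq0.
apply: (mulIf n0); by rewrite mul1r -h.
Qed.
Lemma absN1 : abs (-1) = 1.
Proof.
have h := absM (-1) (-1); rewrite mulrNN mulr1 abs1 in h.
have : abs (-1) ^+ 2 == 1 by rewrite expr2 -h.
rewrite sqrf_eq1 => /orP [/eqP //|/eqP e]. have := abs_ge0 (-1); rewrite e; lra.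
Qed.
Lemma absN x : abs (- x) = abs x. Proof. by rewrite -mulN1r absM absN1 mul1r. Qed.
Lemma absB x y : abs (x - y) = abs (y - x). Proof. by rewrite -absN opprB. Qed.
Lemma absV x : abs (x^-1) = (abs x)^-1.
Proof.
have [->|nx] := eqVneq x 0; first by rewrite invr0 abs0 invr0.
have h := absM x x^-1; rewrite mulfV // abs1 in h.
have p := abs_gt0 nx.
have n0 : abs x != 0 by rewrite gt_eqF.
by apply: (mulfI n0); rewrite -h mulfV.
Qed.
Lemma abs_strict x y : abs y < abs x -> abs (x + y) = abs x.
Proof.
move=> lt; apply/eqP; rewrite eq_le; apply/andP; split.
  by apply: le_trans (absD x y) _; rewrite ge_max lexx ltW.
have := absD (x + y) (- y); rewrite addrK absN le_max => /orP[//|h].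
by move: (lt_le_trans lt h); rewrite ltxx.
Qed.

Definition cont (f : P1 C -> P1 C) := forall u x, cvgP1 abs u x -> cvgP1 abs (fun n => f (u n)) (f x).

Lemma cont_comp f g : cont f -> cont g -> cont (fun z => f (g z)).
Proof. by move=> cf cg u x h; apply: cf; apply: cg. Qed.

Definition trP (b : C) (z : P1 C) := match z with Fin x => Fin (x + b) | Inf => Inf C end.
Definition scP (k : C) (z : P1 C) := match z with Fin x => Fin (k * x) | Inf => Inf C end.
Definition invP (z : P1 C) := match z with Fin x => if x == 0 then Inf C else Fin x^-1 | Inf => Fin 0 end.

Lemma cont_tr b : cont (trP b).
Proof.
move=> u [a|] h /=.
  move=> e e0; have [N HN] := h e e0; exists N => n /HN [b' [-> lt]].
  by exists (b' + b); split => //; have -> : b' + b - (a + b) = b' - a by ring.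
move=> M; have [N HN] := h (Num.max M (abs b)); exists N => n /HN [->|[b' [-> lt]]]; first by left.
right; exists (b' + b); split => //.
move: lt; rewrite gt_max => /andP[l1 l2]; by rewrite abs_strict.
Qed.

Lemma cont_sc k : k != 0 -> cont (scP k).
Proof.
move=> nk; have kp := abs_gt0 nk.
move=> u [a|] h /=.
  move=> e e0; have [N HN] := h (e / abs k) (divr_gt0 e0 kp); exists N => n /HN [b' [-> lt]].
  exists (k * b'); split => //; rewrite -mulrBr absM.
  by rewrite ltr_pdivlMr // mulrC in lt.
move=> M; have [N HN] := h (M / abs k); exists N => n /HN [->|[b' [-> lt]]]; first by left.
right; exists (k * b'); split => //; rewrite absM.
by rewrite ltr_pdivrMr // mulrC in lt.
Qed.

Lemma cont_inv : cont invP.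
Proof.
move=> u [a|] h /=.
- have [a0|na] := eqVneq a 0.
  + subst a => M.
    have p : 0 < (`|M| + 1)^-1 by rewrite invr_gt0; have := normr_ge0 M; lra.
    have [N HN] := h _ p; exists N => n /HN [b' [-> lt]] /=.
    case: (boolP (b' == 0)) => [b0|nb]; first by left.
    right; exists b'^-1; split => //; rewrite absV.
    rewrite subr0 in lt.
    have bp := abs_gt0 nb.
    have : (`|M| + 1) < (abs b')^-1.
      by rewrite -[X in X < _]invrK ltf_pV2 // ?posrE // invr_gt0.
    have := ler_norm M; lra.
  + move=> e e0.
    have ap := abs_gt0 na.
    have p : 0 < Num.min (abs a) (e * abs a * abs a) by rewrite lt_min ap !mulr_gt0.
    have [N HN] := h _ p; exists N => n /HN [b' [-> lt]].
    move: lt; rewrite lt_min => /andP[l1 l2].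
    have eb : abs b' = abs a by rewrite -(subrK a b') addrC abs_strict.
    have nb : b' != 0 by apply/eqP => b0; move: eb; rewrite b0 abs0 => e0'; rewrite e0' ltxx in ap.
    rewrite /= (negbTE nb); exists b'^-1; split => //.
    have -> : b'^-1 - a^-1 = (a - b') / (b' * a) by field; do ?[apply/andP; split].
    rewrite absM absV absM eb absB ltr_pdivrMr ?mulr_gt0 //.
    by rewrite mulrA.
- move=> e e0.
  have [N HN] := h e^-1; exists N => n /HN [->|[b' [-> lt]]] /=.
    by exists 0; rewrite subrr abs0.
  have bp : 0 < abs b' by apply: lt_trans lt; rewrite invr_gt0.
  have nb : b' != 0 by apply/eqP => b0; move: bp; rewrite b0 abs0 ltxx.
  rewrite /= (negbTE nb); exists b'^-1; split => //.
  by rewrite subr0 absV -[e]invrK ltf_pV2 // ?posrE // invr_gt0.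
Qed.

End NA.
Section Mob.
Variable C : fieldType.
Implicit Types (A B : 'M[C]_2) (z : P1 C).

Definition hom (n d : C) : P1 C := if d == 0 then Inf C else Fin (n / d).
Definition vn z : C := match z with Fin x => x | Inf => 1 end.
Definition vd z : C := match z with Fin _ => 1 | Inf => 0 end.
Notation a00 A := (A ord0 ord0).
Notation a01 A := (A ord0 ord_max).
Notation a10 A := (A ord_max ord0).
Notation a11 A := (A ord_max ord_max).

Lemma mobiusE A z : mobius A z =
  hom (a00 A * vn z + a01 A * vd z) (a10 A * vn z + a11 A * vd z).
Proof. by case: z => [x|] /=; rewrite /hom !mulr1 ?mulr0 ?addr0. Qed.

Lemma hom_nz A n d : (n != 0) || (d != 0) ->
  mobius A (hom n d) = hom (a00 A * n + a01 A * d) (a10 A * n + a11 A * d).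
Proof.
move=> nz; rewrite /hom; have [d0|nd] := eqVneq d 0.
  rewrite d0 eqxx orbF in nz *; rewrite !mulr0 !addr0 mulf_eq0 (negbTE nz) orbF.
  by rewrite /=; case: eqP => // /eqP nc; congr Fin; field; do ?[apply/andP; split].
rewrite /=.
have E : a10 A * (n / d) + a11 A = (a10 A * n + a11 A * d) / d by field.
rewrite E mulf_eq0 invr_eq0 (negbTE nd) orbF.
case: eqP => // /eqP nden; congr Fin.
by field; do ?[apply/andP; split].
Qed.

Lemma mulmx2E A B i j : (A *m B) i j = A i ord0 * B ord0 j + A i ord_max * B ord_max j.
Proof.
rewrite mxE big_ord_recl big_ord1.
have L1 : forall k : 'I_1, lift ord0 k = ord_max :> 'I_2 by move=> [[|]] //= ?; apply/val_inj.
by rewrite !L1.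
Qed.

Lemma det2E A : \det A = a00 A * a11 A - a01 A * a10 A.
Proof. rewrite (expand_det_row _ ord0) big_ord_recl big_ord1 /cofactor /= !det_mx11 !mxE /=.
have L1 : forall k : 'I_1, lift ord0 k = ord_max :> 'I_2 by move=> [[|]] //= ?; apply/val_inj.
have L2 : forall k : 'I_1, lift ord_max k = ord0 :> 'I_2 by move=> [[|]] //= ?; apply/val_inj.
rewrite !L1 L2 /= expr0 expr1 mul1r. rewrite mulN1r; ring. Qed.

Lemma vec_nz B z : \det B != 0 ->
  (a00 B * vn z + a01 B * vd z != 0) || (a10 B * vn z + a11 B * vd z != 0).
Proof.
move=> dB; rewrite -negb_and; apply/negP => /andP [/eqP h1 /eqP h2].
rewrite det2E in dB.
have e1 : (a00 B * a11 B - a01 B * a10 B) * vn z =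
   a11 B * (a00 B * vn z + a01 B * vd z) - a01 B * (a10 B * vn z + a11 B * vd z) by ring.
have e2 : (a00 B * a11 B - a01 B * a10 B) * vd z =
   a00 B * (a10 B * vn z + a11 B * vd z) - a10 B * (a00 B * vn z + a01 B * vd z) by ring.
rewrite h1 h2 !mulr0 subrr in e1 e2.
move: e1 e2 => /eqP; rewrite mulf_eq0 (negbTE dB) /= => /eqP e1 /eqP.
rewrite mulf_eq0 (negbTE dB) /= => /eqP e2.
by case: z {h1 h2} e1 e2 => [x|] /= e1 e2; [move: e2 | move: e1] => /eqP; rewrite oner_eq0.
Qed.

Lemma mobius_mul A B z : \det B != 0 -> mobius (A *m B) z = mobius A (mobius B z).
Proof.
move=> dB; rewrite [mobius B z]mobiusE hom_nz ?vec_nz // mobiusE !mulmx2E.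
by congr hom; ring.
Qed.

Lemma hom_scale c n d : c != 0 -> hom (c * n) (c * d) = hom n d.
Proof.
move=> nc; rewrite /hom mulf_eq0 (negbTE nc) /=.
by case: eqP => // /eqP nd; congr Fin; field; do ?[apply/andP; split].
Qed.

Lemma mobius_scale c A z : c != 0 -> mobius (c *: A) z = mobius A z.
Proof.
move=> nc; rewrite !mobiusE !mxE -[RHS](hom_scale _ _ nc); congr hom; ring.
Qed.

Lemma mobius1 z : mobius (1%:M : 'M[C]_2) z = z.
Proof.
case: z => [x|] /=; rewrite !mxE /= ?eqxx /=.
  by rewrite mul0r add0r oner_eq0 mul1r addr0 divr1.
by [].
Qed.

Lemma det_unit A : \det A != 0 -> A \in unitmx.
Proof. by rewrite unitmxE unitfE. Qed.

Lemma det_invmx_nz A : \det A != 0 -> \det (invmx A) != 0.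
Proof. by move=> h; rewrite det_inv invr_eq0. Qed.

Lemma mobiusK A z : \det A != 0 -> mobius (invmx A) (mobius A z) = z.
Proof. by move=> h; rewrite -mobius_mul // mulVmx ?mobius1 // det_unit. Qed.

Lemma mobiusKV A z : \det A != 0 -> mobius A (mobius (invmx A) z) = z.
Proof. by move=> h; rewrite -mobius_mul ?det_invmx_nz // mulmxV ?mobius1 // det_unit. Qed.

End Mob.
Lemma cont_ext (R : realType) (C : fieldType) (abs : C -> R) f g :
  cont abs f -> (forall z, f z = g z) -> cont abs g.
Proof. by move=> cf e; have -> : g = f by apply: functional_extensionality => z; rewrite e. Qed.

Lemma cvg_ext (R : realType) (C : fieldType) (abs : C -> R) u v x :
  (forall n, u n = v n) -> cvgP1 abs u x -> cvgP1 abs v x.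
Proof. by move=> e; have -> : v = u by apply: functional_extensionality => z; rewrite e. Qed.

Lemma cont_mobius (R : realType) (C : fieldType) (abs : C -> R) (A : 'M[C]_2) :
  is_na_abs abs -> \det A != 0 -> cont abs (mobius A).
Proof.
move=> Habs dA; rewrite det2E in dA.
set a := A ord0 ord0 in dA *; set b := A ord0 ord_max in dA *.
set c := A ord_max ord0 in dA *; set d := A ord_max ord_max in dA *.
have [c0|nc] := eqVneq c 0.
  rewrite c0 mulr0 subr0 mulf_eq0 negb_or in dA; case/andP: dA => na nd.
  apply: (cont_ext (f := fun z => trP (b / d) (scP (a / d) z))).
    apply: cont_comp; first exact: cont_tr.
    by apply: cont_sc => //; rewrite mulf_eq0 invr_eq0 negb_or na nd.
  case => [x|] /=; rewrite -/a -/b -/c -/d c0 ?eqxx //.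
  by rewrite mul0r add0r (negbTE nd); congr Fin; field.
set k := (b * c - a * d) / (c * c).
have nk : k != 0.
  by rewrite /k mulf_eq0 invr_eq0 mulf_eq0 (negbTE nc) !orbF -oppr_eq0 opprB.
apply: (cont_ext (f := fun z => trP (a / c) (scP k (invP (trP (d / c) z))))).
  apply: cont_comp; first exact: cont_tr.
  apply: cont_comp; first exact: cont_sc.
  apply: cont_comp; first exact: cont_inv.
  exact: cont_tr.
case => [x|] /=; rewrite -/a -/b -/c -/d; last by rewrite (negbTE nc) mulr0 add0r.
have E : c * x + d = c * (x + d / c) by field.
rewrite E mulf_eq0 (negbTE nc) /=.
case: eqP => //= /eqP nx; congr Fin; rewrite /k; field.
have nx' : x * c + d != 0 by rewrite mulrC E mulf_neq0.
by rewrite nc nx'.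
Qed.

Section Sub.
Variables (C : fieldType) (P : C -> Prop).
Hypothesis HP : is_subfield P.
Lemma P0 : P 0. Proof. by case: HP. Qed.
Lemma P1' : P 1. Proof. by case: HP => _ []. Qed.
Lemma PD x y : P x -> P y -> P (x + y). Proof. by case: HP => _ [_ [h _]]; apply: h. Qed.
Lemma PN x : P x -> P (- x). Proof. by case: HP => _ [_ [_ [h _]]]; apply: h. Qed.
Lemma PM x y : P x -> P y -> P (x * y). Proof. by case: HP => _ [_ [_ [_ [h _]]]]; apply: h. Qed.
Lemma PV x : P x -> P (x^-1).
Proof.
case: HP => _ [_ [_ [_ [_ h]]]] px; case: (boolP (x == 0)) => [/eqP ->|nx]; last exact: h.
by rewrite invr0; exact: P0.
Qed.
Lemma PX x n : P x -> P (x ^+ n).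
Proof. by move=> px; elim: n => [|n IH]; [rewrite expr0; exact: P1' | rewrite exprS; apply: PM]. Qed.

Definition matP n m (A : 'M[C]_(n, m)) := forall i j, P (A i j).

Lemma matP_mul n m l (A : 'M[C]_(n, m)) (B : 'M[C]_(m, l)) : matP A -> matP B -> matP (A *m B).
Proof.
move=> hA hB i j; rewrite mxE; apply: big_ind; [exact: P0 | exact: PD | move=> k _; exact: PM].
Qed.

Lemma matP_det n (A : 'M[C]_n) : matP A -> P (\det A).
Proof.
move=> hA; rewrite /determinant; apply: big_ind; [exact: P0 | exact: PD | move=> s _].
apply: PM; first by apply: PX; apply: PN; exact: P1'.
by apply: big_ind; [exact: P1' | exact: PM | move=> i _; exact: hA].
Qed.

Lemma matP_inv n (A : 'M[C]_n) : matP A -> matP (invmx A).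
Proof.
move=> hA i j; rewrite /invmx; case: (A \in unitmx) => //.
rewrite mxE; apply: PM; first by apply: PV; exact: matP_det.
rewrite /adjugate mxE /cofactor; apply: PM; first by apply: PX; apply: PN; exact: P1'.
by apply: matP_det => u v; rewrite !mxE.
Qed.

Lemma inP1_mobius (A : 'M[C]_2) z : matP A -> inP1 P z -> inP1 P (mobius A z).
Proof.
move=> hA; case: z => [x|] /= px.
  case: eqP => // /eqP nd /=; apply: PM; first by apply: PD; [apply: PM | ].
  by apply: PV; apply: PD; [apply: PM|].
by case: eqP => //= _; apply: PM => //; apply: PV.
Qed.
End Sub.
Lemma inv_uniq (C : fieldType) n (A B : 'M[C]_n) : A \in unitmx -> B *m A = 1%:M -> invmx A = B.
Proof. by move=> uA h; rewrite -[invmx A]mul1mx -h -mulmxA mulmxV // mulmx1. Qed.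

Section Main.
Variables (R : realType) (C : fieldType) (abs : C -> R) (S : finType) (F : S -> C -> Prop).
Hypothesis Habs : is_na_abs abs.
Hypothesis HF : forall s, is_subfield (F s).
Variable g : S -> 'M[C]_2.
Hypothesis Hg : inPGL F g.

Lemma dg s : \det (g s) != 0. Proof. by case: (Hg s). Qed.
Lemma ug s : g s \in unitmx. Proof. exact/det_unit/dg. Qed.

Definition cj (k : S -> 'M[C]_2) := fun s => g s *m k s *m invmx (g s).

Lemma cjK k s : invmx (g s) *m cj k s *m g s = k s.
Proof. by rewrite /cj !mulmxA mulVmx ?ug // mul1mx mulmxKV ?ug. Qed.

Lemma mob_cj k s z : \det (k s) != 0 ->
  mobius (cj k s) z = mobius (g s) (mobius (k s) (mobius (invmx (g s)) z)).
Proof. by move=> dk; rewrite /cj mobius_mul ?det_invmx_nz ?dg // mobius_mul. Qed.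

Lemma pgl_cj k1 k2 : pgl_eq F k1 k2 -> pgl_eq F (cj k1) (cj k2).
Proof.
move=> h s; have [c [Fc [nc e]]] := h s; exists c; split => //; split => //.
by rewrite /cj e -scalemxAr -scalemxAl.
Qed.

Lemma pgl_uncj k1 k2 : pgl_eq F (cj k1) (cj k2) -> pgl_eq F k1 k2.
Proof.
move=> h s; have [c [Fc [nc e]]] := h s; exists c; split => //; split => //.
by rewrite -(cjK k2) e -scalemxAr -scalemxAl cjK.
Qed.

Lemma conj_subgroup G : is_subgroup F G -> is_subgroup F (conjG g G).
Proof.
case=> HPG [H1 [HM [HI HE]]]; split; [|split; [|split; [|split]]].
- move=> h [k [Gk ->]] s; have [Ek dk] := HPG k Gk s; split.
    apply: matP_mul => //; first (apply: matP_mul => //; exact: (proj1 (Hg s))).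
    by apply: matP_inv => //; exact: (proj1 (Hg s)).
  by rewrite !det_mulmx !mulf_neq0 ?det_invmx_nz ?dg.
- exists (fun _ => 1%:M); split => //; apply: functional_extensionality => s.
  by rewrite mulmx1 mulmxV ?ug.
- move=> h1 h2 [k1 [G1 ->]] [k2 [G2 ->]]; exists (fun s => k1 s *m k2 s); split; first exact: HM.
  by apply: functional_extensionality => s; rewrite !mulmxA mulmxKV ?ug.
- move=> h [k [Gk ->]]; exists (fun s => invmx (k s)); split; first exact: HI.
  apply: functional_extensionality => s; have [_ dk] := HPG k Gk s.
  apply: inv_uniq; first by rewrite !unitmxE !det_mulmx !unitfE !mulf_neq0 ?det_invmx_nz ?dg.
  by rewrite !mulmxA mulmxKV ?ug // mulmxKV ?det_unit // mulmxV ?ug.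
- move=> h h' [k [Gk ->]] Hpe; exists (fun s => invmx (g s) *m h' s *m g s); split.
    apply: HE Gk _; apply: pgl_uncj; move=> s; have [c [Fc [nc e]]] := Hpe s.
    exists c; split => //; split => //.
    by rewrite /cj !mulmxA mulmxV ?ug // mul1mx mulmxK ?ug.
  apply: functional_extensionality => s.
  by rewrite !mulmxA mulmxV ?ug // mul1mx mulmxK ?ug.
Qed.

Variable G : (S -> 'M[C]_2) -> Prop.
Hypothesis HG : is_subgroup F G.

Lemma limA x : limit_set abs F (conjG g G) x -> limit_set abs F G (actS (fun s => invmx (g s)) x).
Proof.
case=> y [gam [Hgam [Hd Hc]]].
have [k Hk] : exists k : nat -> S -> 'M[C]_2, forall j, G (k j) /\ gam j = cj (k j).
  apply: (functional_choice (fun j (k : S -> 'M[C]_2) => G k /\ gam j = cj k)) => j.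
  by have [k [Gk e]] := Hgam j; exists k.
exists (actS (fun s => invmx (g s)) y), k; split; [|split].
- by move=> j; case: (Hk j).
- move=> i j ij pe; apply: (Hd i j ij).
  by rewrite (proj2 (Hk i)) (proj2 (Hk j)); apply: pgl_cj.
- move=> s; apply: (cvg_ext (u := fun j => mobius (invmx (g s)) (actS (gam j) y s))).
    move=> j; rewrite /actS (proj2 (Hk j)) mob_cj ?mobiusK ?dg //.
    by case: HG => HPG _; case: (HPG _ (proj1 (Hk j)) s).
  apply: (cont_mobius Habs (det_invmx_nz (dg s))); exact: Hc.
Qed.

Lemma limB x : limit_set abs F G x -> limit_set abs F (conjG g G) (actS g x).
Proof.
case=> y [k [Hk [Hd Hc]]].
exists (actS g y), (fun j => cj (k j)); split; [|split].
- by move=> j; exists (k j).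
- move=> i j ij pe; apply: (Hd i j ij); exact: pgl_uncj.
- move=> s; apply: (cvg_ext (u := fun j => mobius (g s) (actS (k j) y s))).
    move=> j; rewrite /actS mob_cj ?mobiusK ?dg //.
    by case: HG => HPG _; case: (HPG _ (Hk j) s).
  apply: (cont_mobius Habs (dg s)); exact: Hc.
Qed.

Lemma actSK x : actS g (actS (fun s => invmx (g s)) x) = x.
Proof. by apply: functional_extensionality => s; rewrite /actS mobiusKV ?dg. Qed.

Lemma conj_witness L : plectic_witness abs F G L ->
  plectic_witness abs F (conjG g G) (fun s z => L s (mobius (invmx (g s)) z)).
Proof.
case=> HL HW; split.
  move=> s z /HL h; rewrite -(mobiusKV z (dg s)); apply: inP1_mobius => //.
  exact: (proj1 (Hg s)).
move=> x; split.
  by move=> /limA /HW.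
by move=> /HW /limB; rewrite actSK.
Qed.

End Main.

Lemma witness_uniq (S : finType) (T : Type) (P : S -> T -> Prop) (W1 W2 : S -> T -> Prop)
  (out : S -> T) : (forall s, ~ P s (out s)) -> (forall s z, W2 s z -> P s z) ->
  (forall x : S -> T, (exists s, W1 s (x s)) -> (exists s, W2 s (x s))) ->
  forall s z, W1 s z -> W2 s z.
Proof.
move=> hout h2 hx s z w1.
have : exists s0, W1 s0 ((fun t => if t == s then z else out t) s0) by exists s; rewrite eqxx.
move/hx => [s' w2].
move: w2; case: eqP => [-> //|_ /h2 /hout []].
Qed.
Lemma not_in_local (R : realType) (C : closedFieldType) (abs : C -> R) (P : C -> Prop) :
  is_na_abs abs -> is_local_subfield abs P -> exists c, ~ P c.
Proof.
move=> Habs [Psub [_ [[r [/andP [r0 r1] [[pi [Ppi api]] Hval]]] _]]].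
have [x hx] := @GRing.solve_monicpoly C 2 (fun i => if i == 0%N then pi else 0) isT.
rewrite !big_ord_recl big_ord0 /= expr0 mulr1 mul0r !addr0 in hx.
exists x => Px.
have nx : x != 0.
  apply/eqP => x0; move: hx; rewrite x0 expr2 mulr0 => pi0.
  by move: api; rewrite -pi0 (abs0 Habs) => e; rewrite -e ltxx in r0.
have [k hk] := Hval x Px nx.
have : r = abs x * abs x by rewrite -api -hx expr2 (absM Habs).
rewrite hk; case: k {hk} => n.
  rewrite -exprnP; case: n => [|n]; first by rewrite expr0 mulr1 => e; rewrite e ltxx in r1.
  rewrite exprSr.
  have h1 : r ^+ n <= 1 by apply: exprn_ile1; lra.
  have h0 : 0 <= r ^+ n by apply: exprn_ge0; lra.
  move=> e.
  have h2 : r ^+ n * r <= r by rewrite -[X in _ <= X]mul1r ler_wpM2r //; lra.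
  have h3 : 0 <= r ^+ n * r by apply: mulr_ge0 => //; lra.
  have h4 : (r ^+ n * r) * (r ^+ n * r) <= r * r by apply: ler_pM.
  nra.
rewrite NegzE -invr_expz -exprnP.
have h1 : r ^+ n.+1 <= 1 by apply: exprn_ile1; lra.
have h0 : 0 < r ^+ n.+1 by apply: exprn_gt0.
have : 1 <= (r ^+ n.+1)^-1 by rewrite invf_ge1.
move=> h2 e; nra.
Qed.

Theorem lemma2p11 (p : nat) (R : realType) (C : closedFieldType) (abs : C -> R)
  (S : finType) (F : S -> C -> Prop) :
  is_completed_alg_closure abs p ->
  (0 < #|S|)%N ->
  (forall s, is_local_subfield abs (F s)) ->
  forall (G : (S -> 'M[C]_2) -> Prop) (g : S -> 'M[C]_2),
    plectic abs F G -> inPGL F g ->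
    plectic abs F (conjG g G) /\
    (forall L L', plectic_witness abs F G L -> plectic_witness abs F (conjG g G) L' ->
       forall x, dist_points L' x <-> exists y, dist_points L y /\ x = actS g y).
Proof.
move=> hC _ HFl G g [HG [L HL]] Hg.
have Habs : is_na_abs abs by case: hC => _ [].
have HF : forall s, is_subfield (F s) by move=> s; case: (HFl s).
split.
  split; first exact: conj_subgroup.
  by eexists; apply: (conj_witness Habs HF Hg HG HL).
move=> L1 L' HL1 HL'.
have W := conj_witness Habs HF Hg HG HL1.
have [c Hc] : exists c : S -> C, forall s, ~ F s (c s).
  apply: (functional_choice (fun s c => ~ F s c)) => s.
  exact: (not_in_local Habs (HFl s)).
have E : forall s z, L' s z <-> L1 s (mobius (invmx (g s)) z).
  move=> s z; split.
    apply: (witness_uniq (P := fun s z => inP1 (F s) z) (out := fun s => Fin (c s))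
              (W1 := L') (W2 := fun s z => L1 s (mobius (invmx (g s)) z))).
    - by move=> t /=; apply: Hc.
    - exact: (proj1 W).
    - by move=> x /(proj2 (proj2 HL' x)) /(proj1 (proj2 W x)).
  apply: (witness_uniq (P := fun s z => inP1 (F s) z) (out := fun s => Fin (c s))
            (W1 := fun s z => L1 s (mobius (invmx (g s)) z)) (W2 := L')).
  - by move=> t /=; apply: Hc.
  - exact: (proj1 HL').
  - by move=> x /(proj2 (proj2 W x)) /(proj1 (proj2 HL' x)).
move=> x; split.
  move=> hx; exists (actS (fun s => invmx (g s)) x); split.
    by move=> s; apply/E; exact: hx.
  by rewrite (actSK Hg).
case=> y [hy ->] s; apply/E; rewrite /actS mobiusK ?(dg Hg) //.
Qed.
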